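(* Let $\mathbb{X}\subseteq\mathbb{P}^2$ be a $\Bbbk$-configuration of type $(d_1,\dots,d_s)$ with $s\ge2$, defined by subsets $\mathbb{X}_1,\dots,\mathbb{X}_s$ and lines $\mathbb{L}_1,\dots,\mathbb{L}_s$. Let $j,i$ be integers with $0\le j$ and $j+2\le i\le s-1$, and suppose that $|\mathbb{L}_{s-k}\cap\mathbb{X}|=d_s$ for $k=0,\dots,j$; $|\mathbb{L}_{s-k}\cap\mathbb{X}|<d_s$ for $k=j+1,\dots,i-1$; and $|\mathbb{L}_{s-i}\cap\mathbb{X}|=d_s$. Set $\mathbb{T}=\mathbb{L}_{s-i}\cap(\mathbb{X}_{s-j-1}\cup\mathbb{X}_{s-j-2}\cup\cdots\cup\mathbb{X}_{s-i+1})$. Then $\mathbb{X}$ is also a $\Bbbk$-configuration of type $(d_1,\dots,d_s)$ defined by the subsets $\mathbb{X}'_1,\dots,\mathbb{X}'_s$ and lines $\mathbb{L}'_1,\dots,\mathbb{L}'_s$, where: $\mathbb{X}'_k=\mathbb{X}_k$, $\mathbb{L}'_k=\mathbb{L}_k$ for $k=1,\dots,s-i-1$; $\mathbb{X}'_k=\mathbb{X}_{k+1}\setminus\mathbb{T}$, $\mathbb{L}'_k=\mathbb{L}_{k+1}$ for $k=s-i,\dots,s-j-2$; $\mathbb{X}'_{s-j-1}=\mathbb{X}_{s-i}\cup\mathbb{T}$, $\mathbb{L}'_{s-j-1}=\mathbb{L}_{s-i}$; and $\mathbb{X}'_k=\mathbb{X}_k$, $\mathbb{L}'_k=\mathbb{L}_k$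 for $k=s-j,\dots,s$.
   Context: $\Bbbk$ is an algebraically closed field. A $\Bbbk$-configuration of type $(d_1,\dots,d_s)$ is a finite set $\mathbb{X}\subseteq\mathbb{P}^2$ for which there exist integers $1\le d_1<\cdots<d_s$, subsets $\mathbb{X}_1,\dots,\mathbb{X}_s$ of $\mathbb{X}$ and distinct lines $\mathbb{L}_1,\dots,\mathbb{L}_s\subseteq\mathbb{P}^2$ such that (1) $\mathbb{X}=\bigcup_{i=1}^s\mathbb{X}_i$; (2) $|\mathbb{X}_i|=d_i$ and $\mathbb{X}_i\subseteq\mathbb{L}_i$ for each $i$; (3) for $1<i\le s$, $\mathbb{L}_i$ contains no point of $\mathbb{X}_j$ for any $j<i$. We say $\mathbb{X}$ is defined by these subsets and lines; such defining data need not be unique. *)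

(* Defs.v *)
From HB Require Import structures.
From mathcomp Require Import all_boot all_order all_algebra.
Set Implicit Arguments. Unset Strict Implicit. Unset Printing Implicit Defensive.
Import GRing.Theory.
Local Open Scope ring_scope.

(* A point of P^2 over K is represented by its unique normalized homogeneous
   coordinate vector: nonzero, with first nonzero coordinate equal to 1.
   Lines of P^2 are represented likewise by their normalized coefficient
   vectors (a,b,c), the line being {[x:y:z] | a x + b y + c z = 0}. *)
Definition normalized (K : fieldType) (v : K * K * K) : bool :=
  let: (a, b, c) := v in
  if a != 0 then a == 1 else if b != 0 then b == 1 else c == 1.

Definition P2 (K : fieldType) := {v : K * K * K | normalized v}.
Definition line (K : fieldType) := {v : K * K * K | normalized v}.

Definition on_line (K : fieldType) (p : P2 K) (L : line K) : bool :=
  let: (x, y, z) := val p in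
  let: (a, b, c) := val L in
  a * x + b * y + c * z == 0.

Definition has_card (K : fieldType) (A : pred (P2 K)) (n : nat) : Prop :=
  exists s : seq (P2 K), [/\ uniq s, size s = n & forall x, A x = (x \in s)].

Definition kconfig (K : fieldType) (s : nat) (d : nat -> nat)
    (X : pred (P2 K)) (Xs : nat -> pred (P2 K)) (Ls : nat -> line K) : Prop :=
  (0 < s)%N /\ (1 <= d 1)%N /\
  (forall i, (1 <= i < s)%N -> (d i < d i.+1)%N) /\
  (forall x, X x <-> exists2 i, (1 <= i <= s)%N & Xs i x) /\
  (forall i, (1 <= i <= s)%N ->
      has_card (Xs i) (d i) /\ (forall x, Xs i x -> on_line x (Ls i))) /\
  (forall i k, (1 <= i <= s)%N -> (1 <= k <= s)%N -> i <> k -> Ls i <> Ls k) /\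
  (forall i k, (1 <= k)%N -> (k < i)%N -> (i <= s)%N ->
      forall x, Xs k x -> ~~ on_line x (Ls i)).

(* Main.v *)
Require Import Defs.
From HB Require Import structures.
From mathcomp Require Import all_boot all_order all_algebra.
Import GRing.Theory.
From mathcomp Require Import ring zify.
From Stdlib Require Import IndefiniteDescription.

Module Geo.
Local Open Scope ring_scope.

Section Geo.
Variable K : fieldType.
Definition cross (u v : K*K*K) : K*K*K :=
  let: (u1,u2,u3) := u in let: (v1,v2,v3) := v in
  (u2*v3 - u3*v2, u3*v1 - u1*v3, u1*v2 - u2*v1).
Definition dot (u v : K*K*K) : K :=
  let: (u1,u2,u3) := u in let: (v1,v2,v3) := v in u1*v1+u2*v2+u3*v3.
Definition nz (c : K*K*K) : bool :=
  let: (c1,c2,c3) := c in (c1 != 0) || (c2 != 0) || (c3 != 0).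
Definition nrm (c : K*K*K) : K*K*K :=
  let: (c1,c2,c3) := c in
  if c1 != 0 then (1, c2/c1, c3/c1) else if c2 != 0 then (0,1,c3/c2) else (0,0,1).

Lemma crossA (a c : K*K*K) : normalized a -> nz c -> cross a c = (0,0,0) -> a = nrm c.
Proof.
case: a => [[a1 a2] a3]; case: c => [[c1 c2] c3]; rewrite /normalized /nz /cross /nrm /=.
move=> Na Nc [] /eqP; rewrite subr_eq0 => /eqP E1 /eqP; rewrite subr_eq0 => /eqP E2 /eqP.
rewrite subr_eq0 => /eqP E3; move: Na Nc => Na Nc; move: Nc Na.
have [c1z|c1nz] := eqVneq c1 0.
  have [c2z|c2nz] := eqVneq c2 0.
    rewrite /= => c3nz.
    move: E2 E1; rewrite c1z c2z !mulr0 => /esym/eqP; rewrite mulf_eq0 (negbTE c3nz) orbF => /eqP a1z.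
    move=> /eqP; rewrite mulf_eq0 (negbTE c3nz) orbF => /eqP a2z.
    by rewrite a1z a2z eqxx /= => /eqP ->.
  move=> _.
  move: E3; rewrite c1z mulr0 => /eqP; rewrite mulf_eq0 (negbTE c2nz) orbF => /eqP a1z.
  rewrite a1z eqxx /=.
  have [a2z|a2nz] := eqVneq a2 0.
    move: E1; rewrite a2z mul0r => /esym/eqP; rewrite mulf_eq0 (negbTE c2nz) orbF => /eqP a3z.
    by rewrite a3z eq_sym oner_eq0.
  move=> /eqP a21; rewrite a21; congr (_,_,_).
  by apply: (mulIf c2nz); rewrite divfK // -E1 a21 mul1r.
move=> _.
have [a1z|a1nz] := eqVneq a1 0.
  move: E3 E2; rewrite a1z mul0r => /esym/eqP; rewrite mulf_eq0 (negbTE c1nz) orbF => /eqP a2z.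
  rewrite mul0r => /eqP; rewrite mulf_eq0 (negbTE c1nz) orbF => /eqP a3z.
  by rewrite a2z a3z eqxx /= eq_sym oner_eq0.
move=> /eqP a11; rewrite a11; congr (_,_,_).
  by apply: (mulIf c1nz); rewrite divfK // -E3 a11 mul1r.
by apply: (mulIf c1nz); rewrite divfK // E2 a11 mul1r.
Qed.

Arguments crossA [a c].
Lemma bac (w u v : K*K*K) : dot w u = 0 -> dot w v = 0 -> cross w (cross u v) = (0,0,0).
Proof.
case: w => [[w1 w2] w3]; case: u => [[u1 u2] u3]; case: v => [[v1 v2] v3].
rewrite /dot /cross => H1 H2.
have -> : w2 * (u1 * v2 - u2 * v1) - w3 * (u3 * v1 - u1 * v3) = u1 * (w1 * v1 + w2 * v2 + w3 * v3) - v1 * (w1 * u1 + w2 * u2 + w3 * u3) by ring.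
have -> : w3 * (u2 * v3 - u3 * v2) - w1 * (u1 * v2 - u2 * v1) = u2 * (w1 * v1 + w2 * v2 + w3 * v3) - v2 * (w1 * u1 + w2 * u2 + w3 * u3) by ring.
have -> : w1 * (u3 * v1 - u1 * v3) - w2 * (u2 * v3 - u3 * v2) = u3 * (w1 * v1 + w2 * v2 + w3 * v3) - v3 * (w1 * u1 + w2 * u2 + w3 * u3) by ring.
by rewrite H1 H2 !mulr0 subrr.
Qed.

Arguments bac [w u v].
Lemma norm_nz (a : K*K*K) : normalized a -> nz a.
Proof.
case: a => [[a1 a2] a3]; rewrite /normalized /nz.
by case: (a1 != 0) => //; case: (a2 != 0) => // /eqP ->; rewrite oner_eq0.
Qed.

Arguments norm_nz [a].
Lemma cross_self (a : K*K*K) : cross a a = (0,0,0).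
Proof. by case: a => [[a1 a2] a3]; rewrite /cross; congr (_,_,_); ring. Qed.

Lemma on_dot (p : P2 K) (L : line K) : on_line p L -> dot (val L) (val p) = 0.
Proof.
rewrite /on_line /dot; case: (val p) => [[x y] z]; case: (val L) => [[a b] c].
by move/eqP.
Qed.

Lemma two_lines (p q : P2 K) (L1 L2 : line K) :
  on_line p L1 -> on_line q L1 -> on_line p L2 -> on_line q L2 -> L1 <> L2 -> p = q.
Proof.
move=> /on_dot h1 /on_dot h2 /on_dot h3 /on_dot h4 ne.
have np := valP p; have nq := valP q; have nL1 := valP L1; have nL2 := valP L2.
case nzc: (nz (cross (val p) (val q))).
  exfalso; apply: ne; apply: val_inj.
  by rewrite (crossA nL1 nzc (bac h1 h2)) (crossA nL2 nzc (bac h3 h4)).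
apply: val_inj.
have Hq : cross (val p) (val q) = (0,0,0).
  move: nzc; case: (val p) => [[a b] c]; case: (val q) => [[x y] z]; rewrite /nz /cross /=.
  by move=> /negbT; rewrite !negb_or !negbK => /andP [/andP [/eqP -> /eqP ->] /eqP ->].
have E := crossA nq (norm_nz nq) (cross_self (val q)).
by rewrite (crossA np (norm_nz nq) Hq) -E.
Qed.
End Geo.
End Geo.
Import Geo.

Lemma mem_flatten_map (T : eqType) (F : nat -> seq T) (l : seq nat) x :
  (x \in flatten [seq F m | m <- l]) = has (fun m => x \in F m) l.
Proof. by elim: l => //= m l IH; rewrite mem_cat IH. Qed.

Lemma uniq_flatten_disj (T : eqType) (F : nat -> seq T) (l : seq nat) :
  uniq l -> (forall m, m \in l -> uniq (F m)) ->
  (forall m m' x, m \in l -> m' \in l -> x \in F m -> x \in F m' -> m = m') ->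
  uniq (flatten [seq F m | m <- l]).
Proof.
elim: l => //= m l IH /andP [ml ul] hu hd.
rewrite cat_uniq hu ?mem_head //= IH //; last first.
- by move=> m1 m2 x h1 h2; apply: hd; rewrite inE ?h1 ?h2 orbT.
- by move=> m1 h1; apply: hu; rewrite inE h1 orbT.
rewrite andbT; apply/hasPn => x; rewrite mem_flatten_map => /hasP [m' hm' xm'].
apply/negP => xm; have E := hd m m' x (mem_head _ _) _ xm xm'.
by move: ml; rewrite E ?hm' // inE hm' orbT.
Qed.

Lemma size_le1 (T : eqType) (l : seq T) :
  uniq l -> (forall x y, x \in l -> y \in l -> x = y) -> (size l <= 1)%N.
Proof.
case: l => // x [|y l] //= /andP [nx _] h.
by move: nx; rewrite (h x y) ?inE ?eqxx ?orbT.
Qed.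

Lemma sumn_le1 (f : nat -> nat) (l : seq nat) :
  (forall m, m \in l -> f m <= 1)%N -> (sumn [seq f m | m <- l] <= size l)%N.
Proof.
elim: l => //= m l IH h.
have h1 := h m (mem_head _ _).
have h2 : (sumn [seq f m | m <- l] <= size l)%N by apply: IH => m' hm'; apply: h; rewrite inE hm' orbT.
lia.
Qed.

Lemma sumn_all1 (f : nat -> nat) (l : seq nat) :
  (forall m, m \in l -> f m <= 1)%N -> (size l <= sumn [seq f m | m <- l])%N ->
  forall m, m \in l -> f m = 1%N.
Proof.
elim: l => //= m l IH h hs m'.
have h1 := h m (mem_head _ _).
have hl : forall m, m \in l -> (f m <= 1)%N by move=> m0 hm0; apply: h; rewrite inE hm0 orbT.
have h2 := @sumn_le1 f l hl.
rewrite inE => /orP [/eqP ->|]; first lia.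
by apply: IH => //; lia.
Qed.

Lemma sumn_eq1 (f : nat -> nat) (l : seq nat) :
  (forall m, m \in l -> f m = 1)%N -> sumn [seq f m | m <- l] = size l.
Proof.
elim: l => //= m l IH h; rewrite h ?mem_head // IH // => m' hm'.
by apply: h; rewrite inE hm' orbT.
Qed.


Theorem lemma2p9 (K : closedFieldType) (s : nat) (d : nat -> nat)
  (X : pred (P2 K)) (Xs : nat -> pred (P2 K)) (Ls : nat -> line K)
  (j i : nat) :
  kconfig s d X Xs Ls ->
  (2 <= s)%N ->
  (j + 2 <= i)%N -> (i <= s - 1)%N ->
  (forall k, (k <= j)%N -> has_card [pred x | X x && on_line x (Ls (s - k))] (d s)) ->
  (forall k, (j + 1 <= k <= i - 1)%N ->
     exists2 n, (n < d s)%N & has_card [pred x | X x && on_line x (Ls (s - k))] n) ->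
  has_card [pred x | X x && on_line x (Ls (s - i))] (d s) ->
  let T : pred (P2 K) := [pred x | on_line x (Ls (s - i)) &&
        has (fun m => Xs m x) (index_iota (s - i).+1 (s - j))] in
  let Xs' : nat -> pred (P2 K) := fun k =>
    if (k < s - i)%N then Xs k
    else if (k <= s - j - 2)%N then (fun x => Xs k.+1 x && ~~ T x)
    else if k == (s - j - 1)%N then (fun x => Xs (s - i) x || T x)
    else Xs k in
  let Ls' : nat -> line K := fun k =>
    if (k < s - i)%N then Ls k
    else if (k <= s - j - 2)%N then Ls k.+1
    else if k == (s - j - 1)%N then Ls (s - i)
    else Ls k in
  kconfig s d X Xs' Ls'.
Proof.
move=> [s0 [d1 [dinc [hU [hC [hD h3]]]]]] s2 ji iS _ _ hY T Xs' Ls'.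
have a1 : (1 <= s - i)%N by lia.
have ai : (s - i + i = s)%N by lia.
set a := (s - i)%N in a1 ai hY T Xs' Ls' *.
have disj : forall m m' x, (1 <= m <= s)%N -> (1 <= m' <= s)%N -> Xs m x -> Xs m' x -> m = m'.
  move=> m m' x hm hm' xm xm'; case: (ltngtP m m') => // h.
    by move: (h3 m' m ltac:(lia) h ltac:(lia) x xm); rewrite ((hC m' hm').2 x xm').
  by move: (h3 m m' ltac:(lia) h ltac:(lia) x xm'); rewrite ((hC m hm).2 x xm).
have ex : forall m, exists sq : seq (P2 K), (1 <= m <= s)%N ->
    [/\ uniq sq, size sq = d m & forall x, Xs m x = (x \in sq)].
  move=> m; case: (boolP (1 <= m <= s)%N) => hm.
    by have [sq [? ? ?]] := (hC m hm).1; exists sq.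
  by exists [::].
pose S m := proj1_sig (constructive_indefinite_description _ (ex m)).
have HS : forall m, (1 <= m <= s)%N ->
    [/\ uniq (S m), size (S m) = d m & forall x, Xs m x = (x \in S m)] :=
  fun m => proj2_sig (constructive_indefinite_description _ (ex m)).
pose onLa := fun x => on_line x (Ls a).
have cnt1 : forall m, (1 <= m <= s)%N -> m <> a -> (count onLa (S m) <= 1)%N.
  move=> m hm ma; rewrite -size_filter; apply: size_le1; first by rewrite filter_uniq; case: (HS m hm).
  move=> x y; rewrite !mem_filter => /andP [hx xm] /andP [hy ym].
  have [_ _ E] := HS m hm.
  apply: (@two_lines _ x y (Ls m) (Ls a)) => //.
  - by apply: (hC m hm).2; rewrite E.
  - by apply: (hC m hm).2; rewrite E.
  - by apply: hD => //; lia.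
pose W n := S a ++ flatten [seq filter onLa (S m) | m <- iota a.+1 n].
have uW : forall n, (a + n <= s)%N -> uniq (W n).
  move=> n hn; rewrite /W cat_uniq; apply/and3P; split.
  - by case: (HS a ltac:(lia)).
  - apply/hasPn => x; rewrite mem_flatten_map => /hasP [m mi]; rewrite mem_filter => /andP [_ xm].
    move: mi; rewrite mem_iota => mi; apply/negP => xa.
    have [_ _ Ea] := HS a ltac:(lia); have [_ _ Em] := HS m ltac:(lia).
    have := disj a m x ltac:(lia) ltac:(lia); rewrite Ea Em => /(_ xa xm); lia.
  - apply: uniq_flatten_disj; first exact: iota_uniq.
      move=> m; rewrite mem_iota => mi; rewrite filter_uniq //; by case: (HS m ltac:(lia)).
    move=> m m' x; rewrite !mem_iota !mem_filter => mi mi' /andP [_ xm] /andP [_ xm'].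
    have [_ _ Em] := HS m ltac:(lia); have [_ _ Em'] := HS m' ltac:(lia).
    by apply: (disj m m' x); rewrite ?Em ?Em' //; lia.
have memW : forall n x, (a + n <= s)%N ->
    (x \in W n) = Xs a x || (onLa x && has (fun m => Xs m x) (iota a.+1 n)).
  move=> n x hn; rewrite /W mem_cat mem_flatten_map.
  have [_ _ Ea] := HS a ltac:(lia); rewrite Ea; congr (_ || _).
  apply/hasP/andP.
    move=> [m mi]; rewrite mem_filter => /andP [ox xm]; split => //.
    apply/hasP; exists m => //; move: mi; rewrite mem_iota => mi.
    by have [_ _ ->] := HS m ltac:(lia).
  move=> [ox /hasP [m mi xm]]; exists m => //; rewrite mem_filter ox /=.
  by move: mi; rewrite mem_iota => mi; have [_ _ <-] := HS m ltac:(lia).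
have sizeW : forall n, size (W n) = (d a + sumn [seq count onLa (S m) | m <- iota a.+1 n])%N.
  move=> n; rewrite /W size_cat size_flatten /shape -map_comp.
  have [_ -> _] := HS a ltac:(lia); congr (_ + sumn _)%N; apply: eq_map => m /=.
  by rewrite size_filter.
have incr : forall m k, (1 <= m)%N -> (m + k <= s)%N -> (d m + k <= d (m + k))%N.
  move=> m k hm; elim: k => [|k IH] hk; first by rewrite !addn0.
  have := IH ltac:(lia); have := dinc (m + k)%N ltac:(lia); rewrite !addnS; lia.
have memZ : forall x, (x \in W i) = X x && onLa x.
  move=> x; rewrite memW ?ai //; apply/idP/idP.
    case/orP => [xa|/andP [ox /hasP [m mi xm]]].
      rewrite /onLa (hC a ltac:(lia)).2 // andbT; apply/(hU x).2; exists a => //; lia.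
    rewrite ox andbT; apply/(hU x).2; exists m => //; move: mi; rewrite mem_iota; lia.
  move=> /andP [Xx ox]; have [m hm xm] := (hU x).1 Xx.
  case: (ltngtP m a) => h.
  - by move: (h3 a m ltac:(lia) h ltac:(lia) x xm); rewrite /onLa in ox; rewrite ox.
  - apply/orP; right; rewrite ox; apply/hasP; exists m => //; rewrite mem_iota; lia.
  - by rewrite -h xm.
have sizeZ : size (W i) = d s.
  have [sY [uY szY memY]] := hY.
  have uWi : uniq (W i) by apply: uW; lia.
  rewrite -szY; apply: perm_size; apply: uniq_perm => // y; by rewrite -memY memZ.
have cle1 : forall m, m \in iota a.+1 i -> (count onLa (S m) <= 1)%N.
  by move=> m; rewrite mem_iota => mi; apply: cnt1; lia.
have dsa : d s = (d a + i)%N.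
  have := @sumn_le1 (fun m => count onLa (S m)) (iota a.+1 i) cle1; have := incr a i a1 ltac:(lia); rewrite ai size_iota -sizeZ sizeW; lia.
have hall1 : forall m, (a < m <= s)%N -> count onLa (S m) = 1%N.
  move=> m hm; apply: (@sumn_all1 (fun m => count onLa (S m)) (iota a.+1 i)) => //.
    by rewrite size_iota; have := sizeZ; rewrite sizeW; lia.
  by rewrite mem_iota; lia.
have dcons : forall m, (a <= m <= s)%N -> d m = (d a + (m - a))%N.
  move=> m hm; have := incr a (m - a) a1 ltac:(lia); have := incr m (s - m) ltac:(lia) ltac:(lia).
  have -> : (a + (m - a) = m)%N by lia.
  have -> : (m + (s - m) = s)%N by lia.
  lia.

pose sg k := if (k < a)%N then k else if (k <= s - j - 2)%N then k.+1
  else if k == (s - j - 1)%N then a else k.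
have Lsg : forall k, Ls' k = Ls (sg k).
  by move=> k; rewrite /Ls' /sg; case: ifP => // _; case: ifP => // _; case: ifP.
have sg_spec : forall k, [\/ (k < a)%N /\ sg k = k, (a <= k <= s - j - 2)%N /\ sg k = k.+1,
    k = (s - j - 1)%N /\ sg k = a | (s - j - 1 < k)%N /\ sg k = k].
  move=> k; rewrite /sg; case: ifP => h1; first by constructor 1.
  case: ifP => h2; first by constructor 2; split => //; lia.
  case: eqP => h3'; first by constructor 3.
  by constructor 4; split => //; lia.
have Xs_lt : forall k, (k < a)%N -> Xs' k = Xs k by move=> k h; rewrite /Xs' h.
have Xs_mid : forall k, (a <= k <= s - j - 2)%N -> Xs' k = (fun x => Xs k.+1 x && ~~ T x).
  move=> k h; rewrite /Xs'; case: ifP => h1; first (exfalso; lia).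
  by case: ifP => h2 //; exfalso; lia.
have Xs_b : Xs' (s - j - 1)%N = (fun x => Xs a x || T x).
  rewrite /Xs'; case: ifP => h1; first (exfalso; lia).
  case: ifP => h2; first (exfalso; lia).
  by rewrite eqxx.
have Xs_gt : forall k, (s - j - 1 < k)%N -> Xs' k = Xs k.
  move=> k h; rewrite /Xs'; case: ifP => h1 //; case: ifP => h2; first (exfalso; lia).
  by case: eqP => // h3'; exfalso; lia.
have Tin : forall x, T x = onLa x && has (fun m => Xs m x) (iota a.+1 (s - j - a.+1)) by [].
have Tmid : forall m x, (a < m <= s - j - 1)%N -> Xs m x -> T x = onLa x.
  move=> m x hm xm; rewrite Tin; case: (onLa x) => //=; apply/hasP; exists m => //.
  rewrite mem_iota; lia.
have XsP : forall k x, Xs' k x -> [\/ (k < a)%N /\ Xs k x,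
    [/\ (a <= k <= s - j - 2)%N, Xs k.+1 x & ~~ T x],
    k = (s - j - 1)%N /\ (Xs a x \/ (onLa x /\ exists2 r, (a < r <= s - j - 1)%N & Xs r x))
  | (s - j - 1 < k)%N /\ Xs k x].
  move=> k x; case: (ltnP k a) => h1; first by rewrite Xs_lt // => ?; constructor 1.
  case: (leqP k (s - j - 2)) => h2.
    rewrite Xs_mid /=; last lia.
    by move=> /andP [? ?]; constructor 2.
  case: (eqVneq k (s - j - 1)%N) => h4.
    rewrite h4 Xs_b /= => /orP [?|]; first by constructor 3; split => //; left.
    rewrite Tin => /andP [ox /hasP [r hr xr]]; constructor 3; split => //; right; split => //.
    by exists r => //; move: hr; rewrite mem_iota; lia.
  rewrite Xs_gt; last lia.
  by move=> ?; constructor 4; split => //; lia.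
split => //; split => //; split => //.
split.
  move=> x; split.
    move=> Xx; have [m hm xm] := (hU x).1 Xx.
    case: (ltnP m a) => h1.
      by exists m => //; rewrite Xs_lt.
    case: (leqP m (s - j - 1)) => h2.
      case: (eqVneq m a) => h4.
        exists (s - j - 1)%N; first lia.
        by rewrite Xs_b /= -h4 xm.
      case Tx: (T x).
        exists (s - j - 1)%N; first lia.
        by rewrite Xs_b /= Tx orbT.
      exists m.-1; first lia.
      rewrite Xs_mid; last lia.
      by rewrite /= prednK ?xm ?Tx //; lia.
    by exists m => //; rewrite Xs_gt.
  move=> [k hk xk]; apply/(hU x).2.
  case: (XsP k x xk) => [[h xk']|[h xk' _]|[h [xk'|[_ [r hr xr]]]]|[h xk']].
  - by exists k.
  - by exists k.+1 => //; lia.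
  - by exists a => //; lia.
  - by exists r => //; lia.
  - by exists k.
split.
  move=> k hk; split.
    case: (ltnP k a) => h1; first by rewrite Xs_lt //; case: (hC k hk).
    case: (leqP k (s - j - 2)) => h2.
      rewrite Xs_mid; last lia.
      have [uk szk Ek] := HS k.+1 ltac:(lia).
      exists (filter (predC onLa) (S k.+1)); split.
      - by rewrite filter_uniq.
      - have e1 := count_predC onLa (S k.+1); have e2 := hall1 k.+1 ltac:(lia).
        have e3 := dcons k.+1 ltac:(lia); have e4 := dcons k ltac:(lia).
        rewrite size_filter; lia.
      - move=> x /=; rewrite mem_filter /= -Ek.
        case xk: (Xs k.+1 x) => /=; last by rewrite andbF.
        by rewrite (Tmid k.+1 x ltac:(lia) xk) andbT.
    case: (eqVneq k (s - j - 1)%N) => h4.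
      rewrite h4 Xs_b.
      exists (W (s - j - a.+1)); split.
      - by apply: uW; lia.
      - have E : sumn [seq count onLa (S m) | m <- iota a.+1 (s - j - a.+1)] = (s - j - a.+1)%N.
          rewrite (@sumn_eq1 (fun m => count onLa (S m))) ?size_iota //.
          by move=> m; rewrite mem_iota => hm; apply: hall1; lia.
        rewrite sizeW E (dcons (s - j - 1)%N); last lia.
        lia.
      - move=> x /=; rewrite memW; last lia.
        by rewrite Tin.
    by rewrite Xs_gt; [case: (hC k hk) | lia].
  move=> x xk; rewrite Lsg.
  case: (XsP k x xk) => [[h xk']|[h xk' _]|[h [xk'|[ox _]]]|[h xk']];
    case: (sg_spec k) => [[? ->]|[? ->]|[? ->]|[? ->]]; try (exfalso; lia).
  - exact: (hC k hk).2.
  - by apply: (hC k.+1 _).2 => //; lia.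
  - by apply: (hC a _).2 => //; lia.
  - exact: ox.
  - exact: (hC k hk).2.
split.
  move=> k k' hk hk' ne; rewrite !Lsg; apply: hD.
  - by case: (sg_spec k) => [[? ->]|[? ->]|[? ->]|[? ->]]; lia.
  - by case: (sg_spec k') => [[? ->]|[? ->]|[? ->]|[? ->]]; lia.
  - by case: (sg_spec k) => [[? ->]|[? ->]|[? ->]|[? ->]];
      case: (sg_spec k') => [[? ->]|[? ->]|[? ->]|[? ->]]; lia.
move=> m k hk hkm hm x xk; rewrite Lsg.
case: (XsP k x xk) => [[h xk']|[h xk' nT]|[h [xk'|[ox [r hr xr]]]]|[h xk']].
- apply: (h3 (sg m) k hk _ _ x xk');
    by case: (sg_spec m) => [[? ->]|[? ->]|[? ->]|[? ->]]; lia.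
- case: (eqVneq m (s - j - 1)%N) => hmb.
    case: (sg_spec m) => [[? ->]|[? ->]|[? ->]|[? ->]]; try (exfalso; lia).
    apply/negP => ox; move: nT.
    by rewrite (Tmid k.+1 x ltac:(lia) xk') /onLa ox.
  apply: (h3 (sg m) k.+1 _ _ _ x xk'); try lia;
    by case: (sg_spec m) => [[? ->]|[? ->]|[? ->]|[? ->]]; lia.
- apply: (h3 (sg m) a a1 _ _ x xk');
    by case: (sg_spec m) => [[? ->]|[? ->]|[? ->]|[? ->]]; lia.
- apply: (h3 (sg m) r _ _ _ x xr); try lia;
    by case: (sg_spec m) => [[? ->]|[? ->]|[? ->]|[? ->]]; lia.
- apply: (h3 (sg m) k hk _ _ x xk');
    by case: (sg_spec m) => [[? ->]|[? ->]|[? ->]|[? ->]]; lia.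
Qed.
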